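(* Let $\lambda>0$, $\mathbf a>0$. For $y\in\mathbb R$ define $\mathscr H_\lambda(y)=\int_0^{\mathbf a}\big(u-\lambda\ln G(u,1-y)\big)G(u,1-y)\,du$. Then $\mathscr H_\lambda$ is increasing on $(-\infty,0]$ and decreasing on $[0,\infty)$, so that $\max_{y\in\mathbb R}\mathscr H_\lambda(y)=\mathscr H_\lambda(0)=f_\lambda(0)=\lambda\ln\big(\lambda(e^{\mathbf a/\lambda}-1)\big)$. In particular this maximum is positive if $\mathbf a>\lambda\ln(1+1/\lambda)$, zero if $\mathbf a=\lambda\ln(1+1/\lambda)$ and negative if $\mathbf a<\lambda\ln(1+1/\lambda)$.
   Context: Gibbs density: for $u\in[0,\mathbf a]$, $s\in\mathbb R$, $G(u,s)=\frac{s\,e^{us/\lambda}}{\lambda(e^{\mathbf a s/\lambda}-1)}$ if $s\neq0$ and $G(u,0)=1/\mathbf a$. $f_\lambda(y)=\lambda\ln\frac{\lambda(e^{\mathbf a(1-y)/\lambda}-1)}{1-y}$ for $y\neq 1$, $f_\lambda(1)=\lambda\ln\mathbf a$. *)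

(* Defs.v *)
From Stdlib Require Import Reals.
From Coquelicot Require Import Coquelicot.
Open Scope R_scope.

Definition Gibbs (a lam u s : R) : R :=
  if Req_EM_T s 0 then / a
  else s * exp (u * s / lam) / (lam * (exp (a * s / lam) - 1)).

Definition f_lam (a lam y : R) : R :=
  if Req_EM_T y 1 then lam * ln a
  else lam * ln (lam * (exp (a * (1 - y) / lam) - 1) / (1 - y)).

Definition H_lam (a lam y : R) : R :=
  RInt (fun u => (u - lam * ln (Gibbs a lam u (1 - y))) * Gibbs a lam u (1 - y)) 0 a.

(* Main.v *)
Require Import Defs.
From Stdlib Require Import Reals Lra.
From Coquelicot Require Import Coquelicot.
Open Scope R_scope.

Ltac toR := match goal with |- ?A = ?B => change (@eq R A B) end.

Definition Zf (a lam s : R) : R := Gibbs a lam 0 s.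
Definition gb (a lam s u : R) : R := Zf a lam s * exp (u * s / lam).
Definition Mf (a lam s : R) : R := RInt (fun u => u * gb a lam s u) 0 a.

Lemma Gibbs_gb a lam u s : Gibbs a lam u s = gb a lam s u.
Proof.
  unfold gb, Zf, Gibbs. destruct (Req_EM_T s 0) as [->|Hs].
  - replace (u * 0 / lam) with 0 by (unfold Rdiv; ring). rewrite exp_0; ring.
  - replace (0 * s / lam) with 0 by (unfold Rdiv; ring). rewrite exp_0.
    unfold Rdiv; ring.
Qed.

Lemma Zf_pos a lam s : 0 < lam -> 0 < a -> 0 < Zf a lam s.
Proof.
  intros Hl Ha. unfold Zf, Gibbs. destruct (Req_EM_T s 0) as [->|Hs].
  - apply Rinv_0_lt_compat; lra.
  - replace (0 * s / lam) with 0 by (unfold Rdiv; ring). rewrite exp_0.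
    destruct (Rlt_or_le 0 s) as [Hp|Hn].
    + assert (1 < exp (a * s / lam)).
      { rewrite <- exp_0. apply exp_increasing.
        apply Rdiv_lt_0_compat; [apply Rmult_lt_0_compat|]; lra. }
      apply Rdiv_lt_0_compat; [lra|]. apply Rmult_lt_0_compat; lra.
    + assert (s < 0) by lra.
      assert (exp (a * s / lam) < 1).
      { rewrite <- exp_0. apply exp_increasing.
        unfold Rdiv. apply Rmult_neg_pos; [|apply Rinv_0_lt_compat; lra].
        apply Rmult_pos_neg; lra. }
      unfold Rdiv. rewrite Rmult_1_r.
      apply Rmult_neg_neg; [lra|]. apply Rinv_lt_0_compat.
      apply Rmult_pos_neg; lra.
Qed.

Lemma gb_pos a lam s u : 0 < lam -> 0 < a -> 0 < gb a lam s u.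
Proof. intros. unfold gb. apply Rmult_lt_0_compat; [apply Zf_pos; auto|apply exp_pos]. Qed.

Lemma gb_cont a lam s u : continuous (gb a lam s) u.
Proof. apply (@ex_derive_continuous R_AbsRing R_NormedModule). unfold gb. auto_derive. auto. Qed.

Lemma ugb_cont a lam s u : continuous (fun u => u * gb a lam s u) u.
Proof. apply (@ex_derive_continuous R_AbsRing R_NormedModule). unfold gb. auto_derive. auto. Qed.

Lemma gb_int a lam s : 0 < lam -> 0 < a -> is_RInt (gb a lam s) 0 a 1.
Proof.
  intros Hl Ha. destruct (Req_EM_T s 0) as [->|Hs].
  - apply is_RInt_ext with (f := fun _ => / a).
    + intros x _. unfold gb, Zf, Gibbs. destruct (Req_EM_T 0 0); [|lra].
      replace (x * 0 / lam) with 0 by (unfold Rdiv; ring). rewrite exp_0, Rmult_1_r; reflexivity.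
    + replace 1 with (scal (a - 0) (/ a)); [apply (@is_RInt_const R_NormedModule)|].
      change ((a - 0) * / a = 1). field. lra.
  - assert (HE : exp (a * s / lam) - 1 <> 0).
    { intro HE. assert (exp (a * s / lam) = exp 0) by (rewrite exp_0; lra).
      apply exp_inv in H. unfold Rdiv in H.
      apply Rmult_integral in H as [H|H].
      - apply Rmult_integral in H as [H|H]; lra.
      - assert (/ lam <> 0) by (apply Rinv_neq_0_compat; lra). lra. }
    pose (F := fun u => Zf a lam s * lam / s * exp (u * s / lam)).
    replace 1 with (minus (F a) (F 0)).
    + apply (@is_RInt_derive R_CompleteNormedModule F).
      * intros x _. unfold F, gb. auto_derive; auto. toR. unfold Rdiv. field. split; lra.
      * intros x _. apply gb_cont.
    + unfold F, minus, plus, opp; simpl. unfold Zf, Gibbs.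
      destruct (Req_EM_T s 0); [lra|].
      replace (0 * s / lam) with 0 by (unfold Rdiv; ring). rewrite exp_0.
      field. repeat split; lra.
Qed.

Lemma ugb_ex a lam s : ex_RInt (fun u => u * gb a lam s u) 0 a.
Proof. apply (@ex_RInt_continuous R_CompleteNormedModule). intros; apply ugb_cont. Qed.

Lemma ln_gb a lam s u : 0 < lam -> 0 < a ->
  ln (gb a lam s u) = ln (Zf a lam s) + u * s / lam.
Proof.
  intros. unfold gb. rewrite ln_mult; [|apply Zf_pos; auto|apply exp_pos].
  rewrite ln_exp. reflexivity.
Qed.

Lemma H_formula a lam y : 0 < lam -> 0 < a ->
  H_lam a lam y = y * Mf a lam (1 - y) - lam * ln (Zf a lam (1 - y)).
Proof.
  intros Hl Ha. unfold H_lam.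
  transitivity (minus (scal y (Mf a lam (1-y))) (scal (lam * ln (Zf a lam (1-y))) 1)).
  - apply (@is_RInt_unique R_CompleteNormedModule).
    eapply is_RInt_ext;
      [|apply (@is_RInt_minus R_NormedModule); apply (@is_RInt_scal R_NormedModule);
        [apply (@RInt_correct R_CompleteNormedModule); apply ugb_ex | apply (gb_int a lam (1-y)); auto]].
    intros x _. simpl. rewrite Gibbs_gb, ln_gb by auto.
    unfold minus, plus, opp, scal; simpl. unfold mult; simpl.
    toR. field. lra.
  - unfold minus, plus, opp, scal; simpl. unfold mult; simpl. toR. ring.
Qed.

Lemma Kpos a lam p q : 0 < lam -> 0 < a -> p <> q ->
  0 < ln (Zf a lam p) - ln (Zf a lam q) + (p - q) / lam * Mf a lam p.
Proof.
  intros Hl Ha Hpq.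
  set (c := ln (Zf a lam q) - ln (Zf a lam p)).
  set (d := (q - p) / lam).
  assert (Hd : d <> 0).
  { unfold d, Rdiv. intro H. apply Rmult_integral in H as [H|H]; [lra|].
    assert (/ lam <> 0) by (apply Rinv_neq_0_compat; lra). lra. }
  pose (h := fun u => gb a lam p u * (exp (c + d * u) - 1 - (c + d * u))).
  assert (Hq : forall u, gb a lam p u * exp (c + d * u) = gb a lam q u).
  { intro u. unfold gb.
    replace (c + d * u) with ((ln (Zf a lam q) + u * q / lam) + - (ln (Zf a lam p) + u * p / lam))
      by (unfold c, d; field; lra).
    rewrite exp_plus, exp_Ropp, !exp_plus, !exp_ln by (apply Zf_pos; auto).
    assert (0 < Zf a lam p) by (apply Zf_pos; auto).
    assert (0 < exp (u * p / lam)) by apply exp_pos.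
    field. split; lra. }
  assert (Hint : is_RInt h 0 a (minus (minus (minus 1 1) (scal c 1)) (scal d (Mf a lam p)))).
  { eapply is_RInt_ext;
      [|apply (@is_RInt_minus R_NormedModule);
        [apply (@is_RInt_minus R_NormedModule);
          [apply (@is_RInt_minus R_NormedModule); [apply (gb_int a lam q)|apply (gb_int a lam p)]; auto
          |apply (@is_RInt_scal R_NormedModule); apply (gb_int a lam p); auto]
        |apply (@is_RInt_scal R_NormedModule);
         apply (@RInt_correct R_CompleteNormedModule); apply ugb_ex]].
    intros x _. unfold h. simpl.
    unfold minus, plus, opp, scal; simpl. unfold mult; simpl. toR.
    rewrite <- (Hq x). ring. }
  apply (@is_RInt_unique R_CompleteNormedModule) in Hint.
  assert (Hval : RInt h 0 a = ln (Zf a lam p) - ln (Zf a lam q) + (p - q) / lam * Mf a lam p).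
  { rewrite Hint. unfold minus, plus, opp, scal; simpl. unfold mult; simpl.
    unfold c, d. toR. field. lra. }
  rewrite <- Hval.
  assert (Hc : forall x, continuous h x).
  { intro x. apply (@ex_derive_continuous R_AbsRing R_NormedModule). unfold h, gb.
    auto_derive. auto. }
  assert (Hnn : forall x, 0 <= h x).
  { intro x. unfold h. apply Rmult_le_pos; [left; apply gb_pos; auto|].
    destruct (Req_dec (c + d * x) 0) as [H0|H0].
    - rewrite H0, exp_0. lra.
    - pose proof (exp_ineq1 _ H0). lra. }
  assert (Hpos : forall x, x <> - c / d -> 0 < h x).
  { intros x Hx. unfold h. apply Rmult_lt_0_compat; [apply gb_pos; auto|].
    assert (H0 : c + d * x <> 0).
    { intro H0. apply Hx. field_simplify_eq; auto. lra. }
    pose proof (exp_ineq1 _ H0). lra. }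
  assert (Hex : forall u v, ex_RInt h u v).
  { intros. apply (@ex_RInt_continuous R_CompleteNormedModule). intros; apply Hc. }
  pose proof (@RInt_Chasles R_CompleteNormedModule h 0 (a/2) a (Hex _ _) (Hex _ _)) as Hch.
  change (RInt h 0 (a/2) + RInt h (a/2) a = RInt h 0 a) in Hch.
  rewrite <- Hch.
  destruct (Rle_lt_dec (- c / d) (a / 2)) as [Hu|Hu].
  - assert (0 <= RInt h 0 (a/2)).
    { apply RInt_ge_0; [lra|apply Hex|intros; apply Hnn]. }
    assert (0 < RInt h (a/2) a).
    { apply RInt_gt_0; [lra| |intros; apply Hc].
      intros x Hx. apply Hpos. lra. }
    lra.
  - assert (0 < RInt h 0 (a/2)).
    { apply RInt_gt_0; [lra| |intros; apply Hc].
      intros x Hx. apply Hpos. lra. }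
    assert (0 <= RInt h (a/2) a).
    { apply RInt_ge_0; [lra|apply Hex|intros; apply Hnn]. }
    lra.
Qed.

Definition Kf a lam p q := ln (Zf a lam p) - ln (Zf a lam q) + (p - q) / lam * Mf a lam p.

Lemma Mmono a lam p q : 0 < lam -> 0 < a -> p < q -> Mf a lam p < Mf a lam q.
Proof.
  intros Hl Ha Hpq.
  pose proof (Kpos a lam p q Hl Ha ltac:(lra)) as H1.
  pose proof (Kpos a lam q p Hl Ha ltac:(lra)) as H2.
  assert (H3 : 0 < (q - p) * (Mf a lam q - Mf a lam p)).
  { apply Rmult_lt_reg_l with (/ lam). apply Rinv_0_lt_compat; lra.
    rewrite Rmult_0_r. 
    replace (/ lam * ((q - p) * (Mf a lam q - Mf a lam p))) with
      ((ln (Zf a lam p) - ln (Zf a lam q) + (p - q) / lam * Mf a lam p) +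
       (ln (Zf a lam q) - ln (Zf a lam p) + (q - p) / lam * Mf a lam q))
      by (field; lra). lra. }
  nra.
Qed.

Lemma Hphi a lam y : 0 < lam -> 0 < a ->
  H_lam a lam y = - lam * Kf a lam (1 - y) 1 - lam * ln (Zf a lam 1).
Proof.
  intros. rewrite H_formula by auto. unfold Kf. field. lra.
Qed.

Lemma Kgrow a lam p1 p2 : 0 < lam ->
  lam * (Kf a lam p2 1 - Kf a lam p1 1) =
  lam * Kf a lam p2 p1 + (p1 - 1) * (Mf a lam p2 - Mf a lam p1).
Proof. intros. unfold Kf. field. lra. Qed.

Lemma Kge0 a lam p : 0 < lam -> 0 < a -> 0 <= Kf a lam p 1.
Proof.
  intros. destruct (Req_dec p 1) as [->|Hp].
  - unfold Kf. replace (1 - 1) with 0 by ring. unfold Rdiv. lra.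
  - left. apply Kpos; auto.
Qed.

Theorem mainTheorem5 (lam a : R) (Hlam : 0 < lam) (Ha : 0 < a) :
  (forall x y, x < y -> y <= 0 -> H_lam a lam x < H_lam a lam y) /\
  (forall x y, 0 <= x -> x < y -> H_lam a lam y < H_lam a lam x) /\
  (forall y, H_lam a lam y <= H_lam a lam 0) /\
  H_lam a lam 0 = f_lam a lam 0 /\
  f_lam a lam 0 = lam * ln (lam * (exp (a / lam) - 1)) /\
  (a > lam * ln (1 + / lam) -> H_lam a lam 0 > 0) /\
  (a = lam * ln (1 + / lam) -> H_lam a lam 0 = 0) /\
  (a < lam * ln (1 + / lam) -> H_lam a lam 0 < 0).
Proof.
  assert (HE : 1 < exp (a / lam)).
  { rewrite <- exp_0. apply exp_increasing. apply Rdiv_lt_0_compat; lra. }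
  assert (HX : 0 < lam * (exp (a / lam) - 1)) by (apply Rmult_lt_0_compat; lra).
  assert (HZ1 : ln (Zf a lam 1) = - ln (lam * (exp (a / lam) - 1))).
  { rewrite <- ln_Rinv by auto. f_equal. unfold Zf, Gibbs.
    destruct (Req_EM_T 1 0); [lra|].
    replace (0 * 1 / lam) with 0 by (unfold Rdiv; ring).
    replace (a * 1 / lam) with (a / lam) by (unfold Rdiv; ring).
    rewrite exp_0. field. lra. }
  assert (HH0 : H_lam a lam 0 = lam * ln (lam * (exp (a / lam) - 1))).
  { rewrite H_formula by auto. replace (1 - 0) with 1 by ring. rewrite HZ1. ring. }
  assert (Hf0 : f_lam a lam 0 = lam * ln (lam * (exp (a / lam) - 1))).
  { unfold f_lam. destruct (Req_EM_T 0 1); [lra|].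
    replace (a * (1 - 0) / lam) with (a / lam) by (unfold Rdiv; ring).
    replace (1 - 0) with 1 by ring. unfold Rdiv. rewrite Rinv_1, Rmult_1_r. reflexivity. }
  assert (Hl1 : 0 < 1 + / lam) by (pose proof (Rinv_0_lt_compat lam Hlam); lra).
  split; [|split; [|split; [|split; [|split; [|split; [|split]]]]]].
  - intros x y Hxy Hy. rewrite !Hphi by auto.
    pose proof (Kgrow a lam (1 - y) (1 - x) Hlam) as G.
    pose proof (Kpos a lam (1 - x) (1 - y) Hlam Ha ltac:(lra)) as Kp.
    pose proof (Mmono a lam (1 - y) (1 - x) Hlam Ha ltac:(lra)) as Mm.
    assert (0 <= (1 - y - 1) * (Mf a lam (1 - x) - Mf a lam (1 - y))).
    { apply Rmult_le_pos; lra. }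
    assert (0 < lam * Kf a lam (1 - x) (1 - y)) by (apply Rmult_lt_0_compat; auto).
    lra.
  - intros x y Hx Hxy. rewrite !Hphi by auto.
    pose proof (Kgrow a lam (1 - x) (1 - y) Hlam) as G.
    pose proof (Kpos a lam (1 - y) (1 - x) Hlam Ha ltac:(lra)) as Kp.
    pose proof (Mmono a lam (1 - y) (1 - x) Hlam Ha ltac:(lra)) as Mm.
    assert (0 <= (1 - x - 1) * (Mf a lam (1 - y) - Mf a lam (1 - x))).
    { nra. }
    assert (0 < lam * Kf a lam (1 - y) (1 - x)) by (apply Rmult_lt_0_compat; auto).
    lra.
  - intros y. rewrite !Hphi by auto. replace (1 - 0) with 1 by ring.
    pose proof (Kge0 a lam (1 - y) Hlam Ha).
    assert (Kf a lam 1 1 = 0) by (unfold Kf; unfold Rdiv; ring).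
    nra.
  - rewrite HH0, Hf0; reflexivity.
  - exact Hf0.
  - intros Hgt. rewrite HH0. apply Rmult_lt_0_compat; auto.
    rewrite <- ln_1. apply ln_increasing; [lra|].
    assert (ln (1 + / lam) < a / lam).
    { apply Rmult_lt_reg_l with lam; auto. unfold Rdiv.
      rewrite <- Rmult_assoc, (Rmult_comm lam a), Rmult_assoc, Rinv_r, Rmult_1_r by lra. lra. }
    apply exp_increasing in H. rewrite exp_ln in H by auto.
    assert (0 < lam * (exp (a / lam) - 1 - / lam)) by (apply Rmult_lt_0_compat; lra).
    replace (lam * (exp (a / lam) - 1)) with (lam * (exp (a / lam) - 1 - / lam) + 1) by (field; lra).
    lra.
  - intros Heq. rewrite HH0.
    assert (exp (a / lam) = 1 + / lam).
    { rewrite Heq. replace (lam * ln (1 + / lam) / lam) with (ln (1 + / lam)) by (field; lra).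
      apply exp_ln; auto. }
    rewrite H. replace (lam * (1 + / lam - 1)) with 1 by (field; lra). rewrite ln_1. ring.
  - intros Hlt. rewrite HH0.
    assert (a / lam < ln (1 + / lam)).
    { apply Rmult_lt_reg_l with lam; auto. unfold Rdiv.
      rewrite <- Rmult_assoc, (Rmult_comm lam a), Rmult_assoc, Rinv_r, Rmult_1_r by lra. lra. }
    apply exp_increasing in H. rewrite exp_ln in H by auto.
    assert (ln (lam * (exp (a / lam) - 1)) < 0).
    { rewrite <- ln_1. apply ln_increasing; auto.
      replace (lam * (exp (a / lam) - 1)) with (lam * (exp (a / lam) - 1 - / lam) + 1) by (field; lra).
      nra. }
    nra.
Qed.
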